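(* Let $G$ be a digraph and $f$ a discrete Morse function on $G$ such that every vertex $v$ with $f(v)=0$ has out-degree $1$ and in-degree $1$. Then for every pair $(\alpha,\beta)\in\mathcal M(G,f)$ there is a vertex $v$ with $f(v)=0$, with unique in-neighbour $u$ and unique out-neighbour $w$ (so $u\to v\to w$), such that one of the following holds: (1) $\alpha=x_1\cdots x_p\,u\,w\,y_1\cdots y_q$ and $\beta=x_1\cdots x_p\,u\,v\,w\,y_1\cdots y_q$ for some (possibly empty) sequences $x_1\cdots x_p$, $y_1\cdots y_q$; (2) $\alpha$ ends at $u$ and $\beta=\alpha v$ (i.e. $\beta=\cdots u\,v$); (3) $\alpha$ starts at $w$ and $\beta=v\alpha$ (i.e. $\beta=v\,w\cdots$).
   Context: A digraph $G=(V,E)$ consists of a set $V$ and $E\subseteq(V\times V)\setminus\{(v,v)\}$; $(u,v)\in E$ is written $u\to v$. The out-degree (in-degree) of $v$ is the number of edges starting (ending) at $v$. An allowed elementary $n$-path is a sequence $v_0\cdots v_n$ of vertices with $v_{i-1}\to v_i\in E$ for $1\le i\le n$. For allowed elementary paths, $\gamma'<\gamma$ means $\gamma'$ is obtained from $\gamma$ by deleting some entries. A map $f:V\to[0,+\infty)$ is a discrete Morse function on $G$ if for every allowed elementary path $v_0\cdots v_n$: (i) there is at most one index $i$ with $f(v_i)=0$ such that $v_0\cdots v_{i-1}v_{i+1}\cdots v_n$ is an allowed elementary $(n-1)$-path; (ii) there is at most one vertex $u$ with $f(u)=0$ such that for some $-1\le j\le n$ the sequence $v_0\cdots v_juv_{j+1}\cdots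 v_n$ (meaning $uv_0\cdots v_n$ if $j=-1$, $v_0\cdots v_nu$ if $j=n$) is an allowed elementary $(n+1)$-path. Set $f(v_0\cdots v_n)=\sum_if(v_i)$. $\mathcal M(G,f)$ is the set of pairs $(\alpha,\beta)$ with $\alpha$ an allowed elementary $n$-path, $\beta$ an allowed elementary $(n+1)$-path for some $n\ge0$, $\alpha<\beta$ and $f(\alpha)=f(\beta)$. *)

(* Defs.v *)
From mathcomp Require Import all_boot all_order all_algebra.
Set Implicit Arguments. Unset Strict Implicit. Unset Printing Implicit Defensive.
Import Order.TTheory GRing.Theory Num.Theory.
Local Open Scope ring_scope.

Definition digraph (V : finType) (E : rel V) : Prop := irreflexive E.

Definition outdeg (V : finType) (E : rel V) (v : V) : nat := #|[set x | E v x]|.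
Definition indeg (V : finType) (E : rel V) (v : V) : nat := #|[set x | E x v]|.

(* allowed elementary path v_0 ... v_n (n = size s - 1), nonempty *)
Definition allowed (V : finType) (E : rel V) (s : seq V) : bool :=
  if s is x :: t then path E x t else false.

Definition del_at (V : Type) (i : nat) (s : seq V) : seq V := take i s ++ drop i.+1 s.
Definition ins_at (V : Type) (j : nat) (u : V) (s : seq V) : seq V := take j s ++ u :: drop j s.

Definition path_weight (R : numDomainType) (V : finType) (f : V -> R) (s : seq V) : R :=
  \sum_(x <- s) f x.

Definition discrete_morse (R : numDomainType) (V : finType) (E : rel V) (f : V -> R) : Prop :=
  [/\ (forall v, 0 <= f v),
  (forall (x0 : V) (s : seq V), allowed E s ->
     forall i1 i2 : nat,
       (i1 < size s)%N -> f (nth x0 s i1) = 0 -> allowed E (del_at i1 s) ->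
       (i2 < size s)%N -> f (nth x0 s i2) = 0 -> allowed E (del_at i2 s) ->
       i1 = i2) &
  (* (ii): at most one vertex u with f(u) = 0 that can be inserted somewhere
     (positions 0..n+1, i.e. j = -1..n in the paper) to give an allowed path *)
  (forall (s : seq V), allowed E s ->
     forall u1 u2 : V,
       f u1 = 0 -> (exists j, (j <= size s)%N /\ allowed E (ins_at j u1 s)) ->
       f u2 = 0 -> (exists j, (j <= size s)%N /\ allowed E (ins_at j u2 s)) ->
       u1 = u2)].

Definition morse_pair (R : numDomainType) (V : finType) (E : rel V) (f : V -> R)
  (a b : seq V) : Prop :=
  [/\ allowed E a, allowed E b, size b = (size a).+1, subseq a b
    & path_weight f a = path_weight f b].

(* Main.v *)
Require Import Defs.
From mathcomp Require Import all_boot all_order all_algebra.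
From mathcomp Require Import lra.
Import Order.TTheory GRing.Theory Num.Theory.
Local Open Scope ring_scope.

Lemma subseq_ins (V : eqType) (b a : seq V) :
  subseq a b -> size b = (size a).+1 ->
  exists xs ys v, a = xs ++ ys /\ b = xs ++ v :: ys.
Proof.
elim: b a => [|y b IH] [|x a] //=.
- by move=> _ [] /eqP/nilP ->; exists [::], [::], y.
- case: eqP => [-> Hs [] Hsz|_ Hs [] Hsz].
  + have [xs [ys [v [-> ->]]]] := IH a Hs Hsz.
    by exists (y :: xs), ys, v.
  + have := size_subseq_leqif Hs; rewrite /= Hsz => -[_].
    rewrite eqxx => /esym/eqP <-.
    by exists [::], (x :: a), y.
Qed.

Lemma allowed_mid (V : finType) (E : rel V) s1 x y s2 :
  allowed E (s1 ++ x :: y :: s2) -> E x y.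
Proof.
case: s1 => [|h t] /=; first by case/andP.
by rewrite cat_path => /andP[_] /= /and3P[].
Qed.

Theorem lemma6p1 (R : realFieldType) (V : finType) (E : rel V) (f : V -> R) :
  digraph E -> discrete_morse E f ->
  (forall v, f v = 0 -> outdeg E v = 1%N /\ indeg E v = 1%N) ->
  forall a b : seq V, morse_pair E f a b ->
  exists u v w : V,
    [/\ f v = 0, E u v /\ E v w,
        (forall x, E x v -> x = u), (forall x, E v x -> x = w) &
        [\/ (exists xs ys : seq V,
               a = xs ++ u :: w :: ys /\ b = xs ++ u :: v :: w :: ys),
             (exists xs : seq V, a = rcons xs u /\ b = rcons a v)
           | (exists ys : seq V, a = w :: ys /\ b = v :: a)]].
Proof.
move=> _ _ Hdeg a b [Ha Hb Hsz Hsub Hw].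
have [xs [ys [v [Ea Eb]]]] := @subseq_ins _ b a Hsub Hsz.
clear Hsz Hsub.
have fv0 : f v = 0.
  move: Hw; rewrite /path_weight Ea Eb !big_cat big_cons /=; lra.
clear Hw.
have [Ho Hi] := Hdeg v fv0.
move: Ho; rewrite /outdeg => /eqP/cards1P[w Hwset].
move: Hi; rewrite /indeg => /eqP/cards1P[u Huset].
have Evw : E v w by have := set11 w; rewrite -Hwset inE.
have Euv : E u v by have := set11 u; rewrite -Huset inE.
have Uw : forall x, E v x -> x = w.
  by move=> x Hx; apply/set1P; rewrite -Hwset inE.
have Uu : forall x, E x v -> x = u.
  by move=> x Hx; apply/set1P; rewrite -Huset inE.
exists u, v, w; split => //.
case/lastP: xs Ea Eb => [|xs' x] Ea Eb.
- move: Ea Eb => /= Ea Eb; subst a b.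
  case: ys Ha Hb => [|y ys] // _ /= /andP[Hvy _].
  rewrite (Uw y Hvy); constructor 3; by exists ys.
- have Exv : E x v.
    by move: Hb; rewrite Eb cat_rcons; apply: allowed_mid.
  rewrite (Uu x Exv) in Ea Eb.
  case: ys Ea Eb Hb => [|y ys] Ea Eb Hb.
  + constructor 2; exists xs'; split; first by rewrite Ea cats0.
    by rewrite Eb Ea cats0 cats1.
  + have Evy : E v y.
      by move: Hb; rewrite Eb; apply: allowed_mid.
    rewrite (Uw y Evy) in Ea Eb.
    constructor 1; exists xs', ys; by rewrite Ea Eb !cat_rcons.
Qed.
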